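(* For any $m\in\mathbb{N}$ and $\alpha\in\mathbb{N}^n$ with $2\le|\alpha|\le m$, $$\sum_{(\alpha^1,\dots,\alpha^{m-1})\in\mathbb{N}(\alpha,m)}\frac{\alpha!}{\alpha^1!\cdots\alpha^{m-1}!}=\frac{(m-1)!}{(m-|\alpha|)!\,(|\alpha|-1)!}.$$
   Context: For $\alpha\in\mathbb{N}^n$, $|\alpha|=\sum_j\alpha_j$ and $\alpha!=\alpha_1!\cdots\alpha_n!$. $\mathbb{N}(\alpha,m)$ is the set of all $(\alpha^1,\dots,\alpha^{m-1})\in(\mathbb{N}^n)^{m-1}$ with $\alpha^1+\dots+\alpha^{m-1}=\alpha$ and $1\cdot|\alpha^1|+2\cdot|\alpha^2|+\dots+(m-1)\cdot|\alpha^{m-1}|=m$. *)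

(* Defs.v *)
From mathcomp Require Import all_boot all_order all_algebra.
Unset Printing Implicit Defensive.
Import Order.TTheory GRing.Theory Num.Theory.

Definition mabs {n : nat} (a : 'I_n -> nat) : nat := \sum_(i < n) a i.
Definition mfact {n : nat} (a : 'I_n -> nat) : nat := \prod_(i < n) (a i)`!.

(* A family (alpha^1, ..., alpha^{m-1}) is encoded as f : 'I_(m-1) -> ('I_n -> ...),
   where f j stands for alpha^{j+1}.  Entries are taken in 'I_(|alpha|+1), i.e.
   bounded by |alpha|; this is no restriction, since any family summing to
   alpha has entries alpha^j_i <= alpha_i <= |alpha|. *)
Definition fam (n m B : nat) := {ffun 'I_m.-1 -> {ffun 'I_n -> 'I_B.+1}}.

Definition inN (n : nat) (a : 'I_n -> nat) (m : nat) (f : fam n m (mabs a)) : bool :=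
  [forall i : 'I_n, \sum_(j < m.-1) (f j i : nat) == a i] &&
  (\sum_(j < m.-1) j.+1 * mabs (fun i => (f j i : nat)) == m).

(* Main.v *)
Require Import Defs.
From mathcomp Require Import all_boot all_order all_algebra.
From mathcomp Require Import zify.
Import Order.TTheory GRing.Theory Num.Theory.
Local Open Scope ring_scope.

Lemma hockey d k : (\sum_(j < d.+1) 'C(j + k, k) = 'C(d + k.+1, k.+1))%N.
Proof.
elim: d => [|d IH]; first by rewrite big_ord1 add0n !binn.
by rewrite big_ord_recr /= IH addnS binS addSn addnS.
Qed.

Definition Qp (N : nat) : {poly rat} := \poly_(j < N) 1.

Lemma stars N k d : (d < N)%N -> (Qp N ^+ k.+1)`_d = 'C(d + k, k)%:R.
Proof.
elim: k d => [|k IH] d dN.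
  by rewrite expr1 coef_poly dN addn0 bin0.
rewrite exprSr coefM.
rewrite (eq_bigr (fun j : 'I_d.+1 => ('C(j + k, k))%:R)); last first.
  move=> j _; rewrite IH; last by apply: leq_ltn_trans dN; rewrite -ltnS.
  rewrite coef_poly ifT ?mulr1 //.
  by apply: leq_ltn_trans dN; apply: leq_subr.
by rewrite -natr_sum hockey addnS.
Qed.

Definition Etr (B : nat) (y : {poly rat}) : {poly {poly rat}} :=
  \poly_(c < B.+1) (((c`!)%:R^-1 : rat) *: y ^+ c).

Lemma fact_neq0 (c : nat) : (c`!)%:R != 0 :> rat.
Proof. by rewrite pnatr_eq0 -lt0n fact_gt0. Qed.

Lemma binq s i : (i <= s)%N ->
  ('C(s, i))%:R = (s`!)%:R / ((i`!)%:R * ((s - i)`!)%:R) :> rat.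
Proof.
move=> le; rewrite -(bin_fact le) !natrM mulfK //.
by rewrite mulf_neq0 ?fact_neq0.
Qed.

Lemma prodE B r (x : 'I_r -> {poly rat}) s : (s <= B)%N ->
  (\prod_(j < r) Etr B (x j))`_s = ((s`!)%:R^-1 : rat) *: (\sum_j x j) ^+ s.
Proof.
elim: r x s => [|r IH] x s sB.
  rewrite !big_ord0 coefC; case: s sB => [|s] _ /=.
    by rewrite fact0 invr1 scale1r expr0.
  by rewrite expr0n scaler0.
rewrite big_ord_recr big_ord_recr /= coefM.
rewrite addrC exprDn scaler_sumr.
apply: eq_bigr => i _.
rewrite IH; last by apply: leq_trans sB; rewrite -ltnS.
rewrite coef_poly ifT; last by rewrite ltnS (leq_trans (leq_subr _ _) sB).
rewrite -scaler_nat scalerA -scalerAl -scalerAr scalerA mulrC.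
congr (_ *: _); last first.
  by rewrite mulrC.
have le : (i <= s)%N by rewrite -ltnS.
by rewrite binq // mulrA mulVf ?fact_neq0 // mul1r invfM mulrC.


Qed.


Lemma expandE B r (x : 'I_r -> {poly rat}) :
  \prod_(j < r) Etr B (x j) = \sum_(h : {ffun 'I_r -> 'I_B.+1})
    (\prod_j (((h j)`!)%:R^-1 *: x j ^+ h j))%:P * 'X^(\sum_j (h j : nat)).
Proof.
have E y : Etr B y = \sum_(c : 'I_B.+1) ((c`!)%:R^-1 *: y ^+ c)%:P * 'X^c.
  by rewrite /Etr poly_def; apply: eq_bigr => c _; rewrite mul_polyC.
rewrite (eq_bigr (fun j => \sum_(c : 'I_B.+1) (((c`!)%:R^-1 *: x j ^+ c)%:P * 'X^c))); last first.
  by move=> j _; rewrite E.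
rewrite bigA_distr_bigA; apply: eq_bigr => h _.
by rewrite big_split /= rmorph_prod prodrXr.
Qed.

Lemma multinom B r (x : 'I_r -> {poly rat}) s : (s <= B)%N ->
  \sum_(h : {ffun 'I_r -> 'I_B.+1}) ((\sum_j (h j : nat)) == s)%:R *:
     \prod_j (((h j)`!)%:R^-1 *: x j ^+ h j)
  = ((s`!)%:R^-1 : rat) *: (\sum_j x j) ^+ s.
Proof.
move=> sB; rewrite -(prodE B r x s sB) expandE coef_sum; apply: eq_bigr => h _.
rewrite coefCM coefXn mulrC scaler_nat.
by rewrite mulr_natl eq_sym.
Qed.

Lemma Pgen B r s : (s <= B)%N ->
  \sum_(h : {ffun 'I_r -> 'I_B.+1})
    ((((\sum_j (h j : nat)) == s)%:R * ((s`!)%:R / \prod_j ((h j)`!)%:R)) : rat)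
      *: 'X^(\sum_(j < r) j.+1 * h j)
  = (\sum_(j < r) 'X^(j.+1) : {poly rat}) ^+ s.
Proof.
move=> sB.
have := multinom B r (fun j : 'I_r => 'X^(j.+1)) s sB.
move/(congr1 (fun p => ((s`!)%:R : rat) *: p)).
rewrite scalerA mulfV ?fact_neq0 // scale1r => <-.
rewrite scaler_sumr; apply: eq_bigr => h _.
rewrite scaler_prod -prodfV scalerA (eq_bigr (fun j : 'I_r => 'X^(j.+1 * h j))); last first.
  by move=> j _; rewrite exprM.
rewrite prodrXr !scalerA; congr (_ *: _).
by rewrite mulrA [_ * s`!%:R]mulrC.
Qed.


Lemma finalcoef m B : (2 <= B)%N -> (B <= m)%N ->
  ((\sum_(j < m.-1) 'X^(j.+1) : {poly rat}) ^+ B)`_m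
  = (m.-1)`!%:R / ((m - B)`!%:R * ((B.-1)`!)%:R).
Proof.
move=> B2 Bm.
have -> : (\sum_(j < m.-1) 'X^(j.+1) : {poly rat}) = 'X * Qp m.-1.
  rewrite /Qp poly_def mulr_sumr; apply: eq_bigr => j _.
  by rewrite scale1r exprS.
rewrite exprMn coefXnM ifF; last by apply/negbTE; rewrite -leqNgt; lia.
case: B B2 Bm => [|B] // B2 Bm.
rewrite stars; last by lia.
have -> : (m - B.+1 + B = m.-1)%N by lia.
rewrite binq; last by lia.
have -> : (m.-1 - B.+1.-1 = m - B.+1)%N by lia.
by rewrite [X in _ / X]mulrC.
Qed.

Theorem lemma7p3 (n m : nat) (a : 'I_n -> nat) :
  (2 <= mabs a)%N -> (mabs a <= m)%N ->
  \sum_(f : fam n m (mabs a) | @inN n a m f)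
     ((mfact a)%:R / (\prod_(j < m.-1) (mfact (fun i => (f j i : nat)))%:R) : rat)
  = (m.-1)`!%:R / ((m - mabs a)`!%:R * ((mabs a).-1)`!%:R).
Proof.
move=> B2 Bm.
rewrite -finalcoef //.
set B := mabs a.
set r := m.-1.
have aB i : (a i <= B)%N.
  by rewrite /B /mabs (bigD1 i) //= leq_addr.
have -> : (\sum_(j < r) 'X^(j.+1) : {poly rat}) ^+ B =
    \prod_i \sum_(h : {ffun 'I_r -> 'I_B.+1})
    ((((\sum_j (h j : nat)) == a i)%:R * (((a i)`!)%:R / \prod_j ((h j)`!)%:R)) : rat)
      *: 'X^(\sum_(j < r) j.+1 * h j).
  rewrite /B /mabs -prodrXr; apply: eq_bigr => i _.
  by rewrite Pgen.
rewrite bigA_distr_bigA coef_sum /= big_mkcond /=.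
pose untr (F : {ffun 'I_n -> {ffun 'I_r -> 'I_B.+1}}) : fam n m B :=
  [ffun j => [ffun i => F i j]].
pose tr (f : fam n m B) : {ffun 'I_n -> {ffun 'I_r -> 'I_B.+1}} :=
  [ffun i => [ffun j => f j i]].
have c1 : cancel tr untr.
  by move=> f; apply/ffunP => j; apply/ffunP => i; rewrite !ffunE.
have c2 : cancel untr tr.
  by move=> f; apply/ffunP => j; apply/ffunP => i; rewrite !ffunE.
rewrite (reindex untr); last by exists tr => x _.
apply: eq_bigr => F _.
rewrite scaler_prod prodrXr coefZ coefXn.
have wt : (\sum_(j < r) j.+1 * mabs (fun i => (untr F j i : nat))
    = \sum_i \sum_(j < r) j.+1 * F i j)%N.
  rewrite [RHS]exchange_big /=; apply: eq_bigr => j _.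
  rewrite /mabs big_distrr /=; apply: eq_bigr => i _.
  by rewrite !ffunE.
have T : (mfact a)%:R / \prod_(j < r) (mfact (fun i => (untr F j i : nat)))%:R
    = \prod_i (((a i)`!)%:R / \prod_(j < r) ((F i j)`!)%:R) :> rat.
  rewrite prodf_div /mfact natr_prod; congr (_ / _).
  rewrite (eq_bigr (fun j : 'I_r => \prod_i (((F i j)`!)%:R : rat))); last first.
    by move=> j _; rewrite natr_prod; apply: eq_bigr => i _; rewrite !ffunE.
  by rewrite exchange_big.
have sF i : (\sum_(j < r) (untr F j i : nat) = \sum_(j < r) (F i j : nat))%N.
  by apply: eq_bigr => j _; rewrite !ffunE.
rewrite /inN wt T.
case: (boolP [forall i, _]) => Hall /=.
  rewrite [in RHS](eq_bigr (fun i => ((a i)`!)%:R / \prod_(j < r) ((F i j)`!)%:R)); last first.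
    move=> i _; rewrite (_ : (\sum_(j < r) (F i j : nat) == a i) = true) ?mul1r //.
    by have := forallP Hall i; rewrite sF.
  by rewrite eq_sym; case: (_ == _); rewrite ?mulr1 ?mulr0.
move/forallPn: Hall => [i Hi].
rewrite (bigD1 i) //= sF in Hi *.
by rewrite (negbTE Hi) !mul0r.
Qed.
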